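(* Fix $x\in\mathcal{X}$ and let $\rho=\operatorname{cor}\big(Y(0),Y(1)\mid X=x\big)\in[-1,1]$. Assume that $\big(Y(1),Y(0)\big)\mid X=x$ is (bivariate) Gaussian, that $\hat\mu_t(x)=\mu_t(x)$ for $t=0,1$, and that the nonnegative numbers $l_t(x),u_t(x)$ satisfy, for $t=0,1$, \[ \mathbb{P}\big(Y(t)\le \hat\mu_t(x)+u_t(x)\mid X=x\big)=0.95,\qquad \mathbb{P}\big(Y(t)\ge \hat\mu_t(x)-l_t(x)\mid X=x\big)=0.95 . \] Let $\hat\tau(x)=\hat\mu_1(x)-\hat\mu_0(x)$ and define the $CW(\rho)$ interval \[ C_{ITE}(x)=\Big[\hat\tau(x)-D_\rho\big(l_1(x),u_0(x)\big),\ \hat\tau(x)+D_\rho\big(l_0(x),u_1(x)\big)\Big]. \] Then $C_{ITE}$ is optimal in the sense that it is the smallest set satisfying \[ \mathbb{P}\big(Y(1)-Y(0)\in C_{ITE}(X)\mid X=x\big)=0.9 . \]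
   Context: Potential outcomes framework: $(Y(1),Y(0),T,X)$ is a random vector with covariates $X\in\mathcal{X}\subseteq\mathbb{R}^d$ and potential outcomes $Y(1),Y(0)\in\mathbb{R}$. Write $\mu_t(x)=\mathbb{E}[Y(t)\mid X=x]$, $t=0,1$; $\hat\mu_t$ denotes an estimate of $\mu_t$. For $\rho\in[-1,1]$ and $a,b\ge 0$, the correlation-adjusted Euclidean distance is $D_\rho(a,b)=\sqrt{a^2+b^2-2\rho ab}$. *)

(* Defs.v *)
From HB Require Import structures.
From mathcomp Require Import all_boot all_order all_algebra.
From mathcomp Require Import all_classical all_reals all_analysis.
Set Implicit Arguments. Unset Strict Implicit. Unset Printing Implicit Defensive.
Import Order.TTheory GRing.Theory Num.Theory.
Local Open Scope ring_scope.

Definition Drho {R : realType} (rho a b : R) : R :=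
  Num.sqrt (a ^+ 2 + b ^+ 2 - 2 * rho * a * b).

Definition bvn_pdf {R : realType} (m1 m0 s1 s0 r : R) (y : R * R) : R :=
  let z1 := (y.1 - m1) / s1 in
  let z0 := (y.2 - m0) / s0 in
  (2 * pi * s1 * s0 * Num.sqrt (1 - r ^+ 2))^-1 *
  expR (- (z1 ^+ 2 - 2 * r * z1 * z0 + z0 ^+ 2) / (2 * (1 - r ^+ 2))).

(** P (a probability on R x R, the law of (Y(1),Y(0))) is the bivariate Gaussian
    law with means m1, m0, standard deviations s1, s0 and correlation r. *)
Definition is_bvn {R : realType} (P : probability (R * R)%type R)
  (m1 m0 s1 s0 r : R) : Prop :=
  [/\ 0 < s1, 0 < s0, -1 < r < 1 &
    forall A : set (R * R)%type, measurable A ->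
      P A = (\int[(@lebesgue_measure R \x @lebesgue_measure R)%E]_(y in A)
                (bvn_pdf m1 m0 s1 s0 r y)%:E)%E].

(* Main.v *)
Require Import Defs.
From HB Require Import structures.
From mathcomp Require Import all_boot all_order all_algebra.
From mathcomp Require Import all_classical all_reals all_analysis.
From mathcomp Require Import ring lra measurable_realfun.
Import Order.TTheory GRing.Theory Num.Theory.
Local Open Scope classical_set_scope.
Local Open Scope ring_scope.
Section affine.
Context {R : realType}.
Notation mu := (@lebesgue_measure R).
Local Open Scope ereal_scope.

Definition affp (m s : R) (A : set (measurableTypeR R)) : \bar R :=
  mu ((fun x => m + s * x)%R @^-1` A).

Lemma measurable_aff (m s : R) : measurable_fun setT (fun x : R => m + s * x)%R.
Proof. by apply: measurable_funD => //; apply: measurable_funM. Qed.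

Section inst.
Variables m s : R.
Let affp0 : affp m s set0 = 0.
Proof. by rewrite /affp preimage_set0 measure0. Qed.
Let affp_ge0 A : 0 <= affp m s A.
Proof. exact: measure_ge0. Qed.
Let affp_sigma_additive : semi_sigma_additive (affp m s).
Proof.
move=> F mF tF mUF; rewrite /affp preimage_bigcup.
have mf := measurable_aff m s.
apply: measure_semi_sigma_additive.
- by move=> n; have := mf measurableT _ (mF n); rewrite setTI.
- apply/trivIsetP => /= i j _ _ ij; rewrite -preimage_setI.
  by move/trivIsetP : tF => /(_ _ _ _ _ ij) ->//; rewrite preimage_set0.
- by rewrite -preimage_bigcup; have := mf measurableT _ mUF; rewrite setTI.
Qed.
HB.instance Definition _ := isMeasure.Build _ _ _
  (affp m s) affp0 affp_ge0 affp_sigma_additive.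
End inst.

Local Close Scope ereal_scope.
Lemma leb_affp (m s : R) : s != 0 -> forall A, measurable A ->
  mu A = mscale (NngNum (normr_ge0 s)) (affp m s) A.
Proof.
move=> s0 A mA; apply: (@lebesgue_measure_unique R (mscale (NngNum (normr_ge0 s)) (affp m s))) => // _ [[a b] _ <-].
change (mu `]a, b]%classic = (`|s|%:E * mu ((fun x => (m + s * x)%R) @^-1` `]a, b]%classic))%E).
have sa : (0 < `|s|) by rewrite normr_gt0.
case: (ltrP 0 s) => sp.
- have -> : (fun x => m + s * x) @^-1` `]a, b]%classic = `](a - m) / s, (b - m) / s]%classic.
    apply/seteqP; split => x /=; rewrite !in_itv /= ltr_pdivrMr // ler_pdivlMr //;
      by rewrite ltrBlDl lerBrDl mulrC.
  rewrite !lebesgue_measure_itv /= !lte_fin ltr_pM2r ?invr_gt0 // ltrD2r.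
  case: ifPn => ab; last by rewrite mule0.
  rewrite -!EFinD -EFinM gtr0_norm //; congr EFin; field; exact: lt0r_neq0.
- have sn : s < 0 by rewrite lt_neqAle s0 sp.
  have -> : (fun x => m + s * x) @^-1` `]a, b]%classic = `[(b - m) / s, (a - m) / s[%classic.
    apply/seteqP; split => x /=; rewrite !in_itv /= ler_ndivrMr // ltr_ndivlMr //;
      by rewrite ltrBlDl lerBrDl mulrC andbC.
  rewrite !lebesgue_measure_itv /= !lte_fin ltr_nM2r ?invr_lt0 // ltrD2r.
  case: ifPn => ab; last by rewrite mule0.
  rewrite -!EFinD -EFinM ltr0_norm //; congr EFin; field; exact: ltr0_neq0.
Qed.
End affine.
Section affine2.
Context {R : realType}.
Notation mu := (@lebesgue_measure R).
Local Open Scope ereal_scope.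

Lemma integral_aff (m s : R) (D : set R) (g : R -> \bar R) : s != 0%R ->
  measurable D -> measurable_fun D g -> (forall x, D x -> 0 <= g x) ->
  \int[mu]_(x in D) g x =
  (`|s|)%:E * \int[mu]_(x in (fun x => m + s * x)%R @^-1` D) g (m + s * x)%R.
Proof.
move=> s0 mD mg g0.
transitivity (\int[mscale (NngNum (normr_ge0 s)) (affp m s)]_(x in D) g x).
  by apply: eq_measure_integral => A mA _; exact: leb_affp.
rewrite ge0_integral_mscale //; congr (_ * _).
apply: (@ge0_integral_pushforward _ _ (measurableTypeR R) (measurableTypeR R) R _ (measurable_aff m s) mu) => //.
by move=> x; rewrite inE; exact: g0.
Qed.
End affine2.
Section normal_aff.
Context {R : realType}.
Notation mu := (@lebesgue_measure R).

Lemma normal_peakE (s : R) : normal_peak s = (`|s| * Num.sqrt (pi *+ 2))^-1.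
Proof. by rewrite /normal_peak -mulrnAr sqrtrM ?sqr_ge0 // sqrtr_sqr. Qed.

Lemma normal_pdf_aff (m s x : R) : s != 0 ->
  `|s| * normal_pdf m s (m + s * x) = normal_pdf 0 1 x.
Proof.
move=> s0; rewrite !normal_pdfE ?oner_neq0 // !normal_peakE /normal_fun normr1 mul1r.
have sp : 0 < `|s| by rewrite normr_gt0.
have pp : 0 < Num.sqrt (pi *+ 2 : R) by rewrite sqrtr_gt0 pmulrn_lgt0 // pi_gt0.
rewrite mulrA invfM mulrA divff ?gt_eqF // mul1r; congr (_ * expR _).
by field; rewrite s0.
Qed.

Local Open Scope ereal_scope.
Lemma normal_prob_aff (m s : R) (D : set R) : s != 0%R -> measurable D ->
  normal_prob m s D = normal_prob 0 1 ((fun x => m + s * x)%R @^-1` D).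
Proof.
move=> s0 mD; rewrite /normal_prob (@integral_aff _ m s D _ s0) //; last 2 first.
- by apply/measurable_EFinP/measurable_funTS; exact: measurable_normal_pdf.
- by move=> x _; rewrite lee_fin normal_pdf_ge0.
have mDp : measurable ((fun x => m + s * x)%R @^-1` D).
  by have := measurable_aff m s measurableT _ mD; rewrite setTI.
have mf : measurable_fun ((fun x => m + s * x)%R @^-1` D) (fun x => (normal_pdf m s (m + s * x)%R)%:E).
  apply/measurable_EFinP; apply: measurableT_comp; first exact: measurable_normal_pdf.
  exact: measurable_funTS (measurable_aff m s).
have f0 : forall x, ((fun x => m + s * x)%R @^-1` D) x -> 0 <= (normal_pdf m s (m + s * x)%R)%:E.
  by move=> x _; rewrite lee_fin normal_pdf_ge0.
rewrite -ge0_integralZl_EFin //.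
by apply: eq_integral => x _; rewrite -EFinM normal_pdf_aff.
Qed.
End normal_aff.
Section factor.
Context {R : realType}.
Lemma expo (a bb s1 s0 r c V : R) :
  s1 != 0 -> s0 != 0 -> 1 - r ^+ 2 != 0 -> V != 0 ->
  V = s1 ^+ 2 + c ^+ 2 * s0 ^+ 2 - 2 * c * r * s1 * s0 ->
  - ((a / s1) ^+ 2 - 2 * r * (a / s1) * (bb / s0) + (bb / s0) ^+ 2) / (2 * (1 - r ^+ 2)) =
  - (a - c * bb) ^+ 2 / (V *+ 2) +
  - (bb - (r * s1 * s0 - c * s0 ^+ 2) / V * (a - c * bb)) ^+ 2 /
    (s0 ^+ 2 * s1 ^+ 2 * (1 - r ^+ 2) / V *+ 2).
Proof.
move=> h1 h0 hr hV hVe.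
rewrite -(mulr_natr V 2) -(mulr_natr (s0 ^+ 2 * s1 ^+ 2 * (1 - r ^+ 2) / V) 2).
set N := r * s1 * s0 - c * s0 ^+ 2.
set d := a - c * bb.
have e1 : - ((a / s1) ^+ 2 - 2 * r * (a / s1) * (bb / s0) + (bb / s0) ^+ 2) / (2 * (1 - r ^+ 2)) =
  - (s0 ^+ 2 * a ^+ 2 - 2 * r * s1 * s0 * a * bb + s1 ^+ 2 * bb ^+ 2) / (2 * s0 ^+ 2 * s1 ^+ 2 * (1 - r ^+ 2)).
  by field; rewrite h1 h0 hr.
have e2 : - d ^+ 2 / (V * 2) + - (bb - N / V * d) ^+ 2 / (s0 ^+ 2 * s1 ^+ 2 * (1 - r ^+ 2) / V * 2) =
  - (s0 ^+ 2 * s1 ^+ 2 * (1 - r ^+ 2) * d ^+ 2 + (V * bb - N * d) ^+ 2) / (2 * V * s0 ^+ 2 * s1 ^+ 2 * (1 - r ^+ 2)).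
  by field; rewrite h1 h0 hr hV.
rewrite e1 e2.
have -> : s0 ^+ 2 * s1 ^+ 2 * (1 - r ^+ 2) * d ^+ 2 + (V * bb - N * d) ^+ 2 =
  V * (s0 ^+ 2 * a ^+ 2 - 2 * r * s1 * s0 * a * bb + s1 ^+ 2 * bb ^+ 2).
  by rewrite /N /d hVe; ring.
by field; rewrite h1 h0 hr hV.
Qed.

Definition VV (s1 s0 r c : R) := s1 ^+ 2 + c ^+ 2 * s0 ^+ 2 - 2 * c * r * s1 * s0.
Definition WW (s1 s0 r c : R) := s0 ^+ 2 * s1 ^+ 2 * (1 - r ^+ 2) / VV s1 s0 r c.
Definition BB (s1 s0 r c : R) := (r * s1 * s0 - c * s0 ^+ 2) / VV s1 s0 r c.

Lemma VV_gt0 (s1 s0 r c : R) : 0 < s1 -> 0 < s0 -> -1 < r < 1 -> 0 < VV s1 s0 r c.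
Proof.
move=> h1 h0 /andP[ra rb].
have : VV s1 s0 r c = (c * s0 - r * s1) ^+ 2 + s1 ^+ 2 * (1 - r ^+ 2) by rewrite /VV; ring.
move=> ->; apply: ltr_wpDl; first exact: sqr_ge0.
apply: mulr_gt0; first by rewrite exprn_gt0.
by rewrite subr_gt0 -real_normK ?num_real // exprn_ilt1 // ltr_norml ra rb.
Qed.

Lemma bvn_factor (m1 m0 s1 s0 r c t b : R) :
  0 < s1 -> 0 < s0 -> -1 < r < 1 ->
  bvn_pdf m1 m0 s1 s0 r (t + c * b, b) =
  normal_pdf (m1 - c * m0) (Num.sqrt (VV s1 s0 r c)) t *
  normal_pdf (m0 + BB s1 s0 r c * (t - (m1 - c * m0))) (Num.sqrt (WW s1 s0 r c)) b.
Proof.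
move=> h1 h0 hr.
have Vp := @VV_gt0 s1 s0 r c h1 h0 hr.
have r2 : 0 < 1 - r ^+ 2.
  case/andP: hr => ra rb.
  by rewrite subr_gt0 -real_normK ?num_real // exprn_ilt1 // ltr_norml ra rb.
have Wp : 0 < WW s1 s0 r c by rewrite /WW !mulr_gt0 ?exprn_gt0 ?invr_gt0.
have pp : 0 < Num.sqrt (pi *+ 2 : R) by rewrite sqrtr_gt0 pmulrn_lgt0 // pi_gt0.
rewrite !normal_pdfE ?gt_eqF ?sqrtr_gt0 // !normal_peakE /normal_fun.
rewrite !ger0_norm ?sqrtr_ge0 // !sqr_sqrtr ?ltW //.
rewrite /bvn_pdf /=.
rewrite [RHS]mulrACA -invfM -expRD; congr (_^-1 * expR _).
  have p2 : 0 <= (pi *+ 2 : R) by rewrite mulr2n addr_ge0 // pi_ge0.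
  rewrite [RHS]mulrACA -expr2 (sqr_sqrtr p2).
  rewrite -(sqrtrM (WW s1 s0 r c) (ltW Vp)).
  have -> : VV s1 s0 r c * WW s1 s0 r c = (s1 * s0) ^+ 2 * (1 - r ^+ 2).
    by rewrite /WW; field; rewrite gt_eqF.
  rewrite sqrtrM ?sqr_ge0 // sqrtr_sqr ger0_norm ?mulr_ge0 ?ltW //.
  by rewrite mulr2n; ring.
set a := t + c * b - m1; set bb := b - m0.
have -> : t - (m1 - c * m0) = a - c * bb by rewrite /a /bb; ring.
have -> : b - (m0 + BB s1 s0 r c * (a - c * bb)) = bb - BB s1 s0 r c * (a - c * bb) by rewrite /bb; ring.
rewrite /BB /WW; apply: expo => //; rewrite ?gt_eqF //.
Qed.
End factor.
Section meas.
Context {R : realType}.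
Notation mu := (@lebesgue_measure R).

Lemma measurable_bvn d (T : measurableType d) (f g : T -> R) (m1 m0 s1 s0 r : R) :
  measurable_fun setT f -> measurable_fun setT g ->
  measurable_fun setT (fun z => bvn_pdf m1 m0 s1 s0 r (f z, g z)).
Proof.
move=> mf mg; rewrite /bvn_pdf /=.
apply: measurable_funM => //.
apply: measurableT_comp; first exact: measurable_expR.
repeat (apply: measurable_funM || apply: measurable_funB || apply: measurable_funD ||
        apply: measurable_funX || apply: measurable_funN || exact: measurable_cst || assumption).
Qed.

Local Open Scope ereal_scope.
Lemma integral_shift (h : R) (g : R -> \bar R) :
  measurable_fun setT g -> (forall x, 0 <= g x) ->
  \int[mu]_x g x = \int[mu]_x g (h + x)%R.
Proof.
move=> mg g0.
have g0' : forall x, setT x -> 0 <= g x by move=> x _; exact: g0.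
rewrite (@integral_aff _ h 1 setT g (oner_neq0 R)) //.
rewrite normr1 mul1e preimage_setT.
by apply: eq_integral => x _; rewrite mul1r.
Qed.
End meas.
Section core.
Context {R : realType}.
Notation mu := (@lebesgue_measure R).

Lemma bvn_ge0 (m1 m0 s1 s0 r : R) y : 0 < s1 -> 0 < s0 -> 0 <= bvn_pdf m1 m0 s1 s0 r y.
Proof.
move=> h1 h0; rewrite /bvn_pdf /=; apply: mulr_ge0; last exact: expR_ge0.
by rewrite invr_ge0 !mulr_ge0 ?sqrtr_ge0 ?pi_ge0 ?ltW.
Qed.

Local Open Scope ereal_scope.
Lemma core (m1 m0 s1 s0 r c : R) (S : set R) :
  (0 < s1)%R -> (0 < s0)%R -> (-1 < r < 1)%R -> measurable S ->
  \int[mu]_b \int[mu]_a (\1_S (a - c * b) * bvn_pdf m1 m0 s1 s0 r (a, b))%:E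
  = normal_prob (m1 - c * m0) (Num.sqrt (VV s1 s0 r c)) S.
Proof.
move=> h1 h0 hr mS.
pose F := fun z : R * R => (\1_S z.1 * bvn_pdf m1 m0 s1 s0 r (z.1 + c * z.2, z.2))%:E.
have mF : measurable_fun setT F.
  apply/measurable_EFinP; apply: measurable_funM.
    apply: measurableT_comp; [exact: measurable_indic | exact: measurable_fst].
  apply: measurable_bvn; last exact: measurable_snd.
  apply: measurable_funD; first exact: measurable_fst.
  by apply: measurable_funM => //; exact: measurable_snd.
have F0 z : 0 <= F z by rewrite lee_fin mulr_ge0 ?bvn_ge0 // indicE.
transitivity (\int[mu]_b \int[mu]_t F (t, b)).
  apply: eq_integral => b _.
  rewrite (integral_shift (c * b)%R).
  - by apply: eq_integral => t _; rewrite /F /= (addrC (c * b)%R t) addrK.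
  - apply/measurable_EFinP; apply: measurable_funM.
      apply: measurableT_comp; first exact: measurable_indic.
      by apply: measurable_funB => //; exact: measurable_cst.
    by apply: measurable_bvn => //; exact: measurable_cst.
  - by move=> a; rewrite lee_fin mulr_ge0 ?bvn_ge0 // indicE.
transitivity (\int[mu]_t \int[mu]_b F (t, b)).
  by apply/esym; apply: (@fubini_tonelli _ _ (measurableTypeR R) (measurableTypeR R) R mu mu F mF F0).
rewrite /normal_prob [RHS]integral_mkcond.
apply: eq_integral => t _.
transitivity (\int[mu]_b ((\1_S t * normal_pdf (m1 - c * m0) (Num.sqrt (VV s1 s0 r c)) t)%:E *
   (normal_pdf (m0 + BB s1 s0 r c * (t - (m1 - c * m0))) (Num.sqrt (WW s1 s0 r c)) b)%:E)).
  by apply: eq_integral => b _; rewrite /F /= bvn_factor // mulrA EFinM.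
rewrite ge0_integralZl_EFin //; last 3 first.
- by move=> b _; rewrite lee_fin normal_pdf_ge0.
- by apply/measurable_EFinP; exact: measurable_normal_pdf.
- by rewrite mulr_ge0 ?normal_pdf_ge0.
rewrite integral_normal_pdf mule1 /patch indicE.
by case: ifPn => _; rewrite ?mul1r ?mul0r.
Qed.
End core.
Section laws.
Context {R : realType}.
Notation mu := (@lebesgue_measure R).
Lemma bvn_swap (m1 m0 s1 s0 r a b : R) :
  bvn_pdf m1 m0 s1 s0 r (a, b) = bvn_pdf m0 m1 s0 s1 r (b, a).
Proof.
rewrite /bvn_pdf /=; congr (_^-1 * expR (- _ / _)); ring.
Qed.

Local Open Scope ereal_scope.
Lemma law_lin (P : probability (R * R)%type R) (m1 m0 s1 s0 r c : R) (S : set R) :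
  is_bvn P m1 m0 s1 s0 r -> measurable S ->
  P ((fun y => y.1 - c * y.2)%R @^-1` S) =
  normal_prob (m1 - c * m0) (Num.sqrt (VV s1 s0 r c)) S.
Proof.
move=> [h1 h0 hr hP] mS.
have mf : measurable_fun setT (fun y : R * R => y.1 - c * y.2)%R.
  apply: measurable_funB; first exact: measurable_fst.
  by apply: measurable_funM => //; exact: measurable_snd.
have mA : measurable ((fun y : R * R => y.1 - c * y.2)%R @^-1` S).
  by have := mf measurableT _ mS; rewrite setTI.
rewrite hP // integral_mkcond.
pose F := fun z : R * R => (\1_S (z.1 - c * z.2) * bvn_pdf m1 m0 s1 s0 r z)%:E.
transitivity (\int[(mu \x mu)%E]_z F z).
  apply: eq_integral => z _; rewrite /F /patch indicE.
  have -> : (z \in (fun y : R * R => y.1 - c * y.2)%R @^-1` S) = ((z.1 - c * z.2)%R \in S) by [].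
  by case: ifPn => zA; rewrite ?mul1r ?mul0r.
have mF : measurable_fun setT F.
  apply/measurable_EFinP; apply: measurable_funM.
    by apply: measurableT_comp; [exact: measurable_indic | exact: mf].
  have -> : bvn_pdf m1 m0 s1 s0 r = (fun z => bvn_pdf m1 m0 s1 s0 r (z.1, z.2)).
    by apply/funext => -[].
  by apply: measurable_bvn; [exact: measurable_fst | exact: measurable_snd].
have F0 z : 0 <= F z by rewrite lee_fin mulr_ge0 ?bvn_ge0 // indicE.
rewrite (@fubini_tonelli2 _ _ (measurableTypeR R) (measurableTypeR R) R mu mu F mF F0).
exact: core.
Qed.
End laws.
Section laws2.
Context {R : realType}.
Notation mu := (@lebesgue_measure R).
Local Open Scope ereal_scope.

Lemma law_snd (P : probability (R * R)%type R) (m1 m0 s1 s0 r : R) (S : set R) :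
  is_bvn P m1 m0 s1 s0 r -> measurable S ->
  P (snd @^-1` S) = normal_prob (m0 - 0 * m1) (Num.sqrt (VV s0 s1 r 0)) S.
Proof.
move=> [h1 h0 hr hP] mS.
have mA : measurable ((@snd R R) @^-1` S).
  by have := @measurable_snd _ _ R R measurableT _ mS; rewrite setTI.
rewrite hP // integral_mkcond.
pose F := fun z : R * R => (\1_S (z.2 - 0 * z.1) * bvn_pdf m0 m1 s0 s1 r (z.2, z.1))%:E.
transitivity (\int[(mu \x mu)%E]_z F z).
  apply: eq_integral => z _; rewrite /F /patch indicE mul0r subr0.
  have -> : (z \in (@snd R R) @^-1` S) = (z.2 \in S) by [].
  by case: z => a b /=; rewrite bvn_swap; case: ifPn => zA; rewrite ?mul1r ?mul0r.
have mF : measurable_fun setT F.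
  apply/measurable_EFinP; apply: measurable_funM.
    apply: measurableT_comp; first exact: measurable_indic.
    apply: measurable_funB; first exact: measurable_snd.
    by apply: measurable_funM => //; exact: measurable_fst.
  by apply: measurable_bvn; [exact: measurable_snd | exact: measurable_fst].
have F0 z : 0 <= F z by rewrite lee_fin mulr_ge0 ?bvn_ge0 // indicE.
rewrite (@fubini_tonelli1 _ _ (measurableTypeR R) (measurableTypeR R) R mu mu F mF F0).
exact: core.
Qed.
End laws2.
Section phi.
Context {R : realType}.
Notation mu := (@lebesgue_measure R).

Lemma normal_pdfN (m s : R) : normal_pdf m (- s) = normal_pdf m s.
Proof.
apply/funext => x; have [->|s0] := eqVneq s 0; first by rewrite oppr0.
by rewrite !normal_pdfE ?oppr_eq0 // /normal_peak /normal_fun sqrrN.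
Qed.

Lemma normal_probN (m s : R) (D : set R) : normal_prob m (- s) D = normal_prob m s D.
Proof. by rewrite /normal_prob normal_pdfN. Qed.

Notation N := (normal_prob (0:R) 1).

Lemma Phi_le (m s u : R) : 0 < s ->
  normal_prob m s `]-oo, m + u]%classic = N `]-oo, u / s]%classic.
Proof.
move=> s0; rewrite normal_prob_aff ?gt_eqF //; congr (N _).
apply/seteqP; split => x /=; rewrite !in_itv /= ler_pdivlMr // lerD2l mulrC //.
Qed.

Lemma Phi_ge (m s l : R) : 0 < s ->
  normal_prob m s `[m - l, +oo[%classic = N `]-oo, l / s]%classic.
Proof.
move=> s0; rewrite -normal_probN normal_prob_aff ?oppr_eq0 ?gt_eqF //; congr (N _).
apply/seteqP; split => x /=; rewrite !in_itv /= andbT ler_pdivlMr // lerD2l mulNr lerN2 mulrC //.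
Qed.
End phi.
Section phi2.
Context {R : realType}.
Notation mu := (@lebesgue_measure R).
Notation N := (normal_prob (0:R) 1).
Local Open Scope ereal_scope.

Lemma N_itv_gt0 (a b : R) : (a < b)%R -> 0 < N `]a, b]%classic.
Proof.
move=> ab.
pose c := (normal_peak (1:R) * expR (- (a ^+ 2 + b ^+ 2) / 2))%R.
have c0 : (0 < c)%R by rewrite mulr_gt0 ?expR_gt0 // normal_peak_gt0 ?oner_neq0.
apply: (@lt_le_trans _ _ (\int[mu]_(x in `]a, b]%classic) (cst c%:E) x)).
  rewrite integral_cst //= lebesgue_measure_itv /= lte_fin ab -EFinD -EFinM lte_fin.
  by rewrite mulr_gt0 // subr_gt0.
apply: ge0_le_integral => //.
- by move=> x _; rewrite lee_fin ltW.
- by apply/measurable_EFinP/measurable_funTS; exact: measurable_normal_pdf.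
move=> x /=; rewrite in_itv /= => /andP[ax xb].
rewrite lee_fin normal_pdfE ?oner_neq0 // /normal_fun /c ler_wpM2l ?normal_peak_ge0 //.
rewrite ler_expR subr0 expr1n.
have : (x ^+ 2 <= a ^+ 2 + b ^+ 2)%R.
  have [x0|x0] := (leP 0%R x).
    nra.
  nra.
move=> h; rewrite -mulr_natr mul1r; lra.
Qed.

Lemma Phi_lt (a b : R) : (a < b)%R -> N `]-oo, a]%classic < N `]-oo, b]%classic.
Proof.
move=> ab.
have -> : `]-oo, b]%classic = `]-oo, a]%classic `|` `]a, b]%classic.
  apply/seteqP; split => x /=; rewrite !in_itv /=.
    by case: (leP x a) => xa /=; [left | right].
  by case => [xa|/andP[_ ->]] //; exact: le_trans xa (ltW ab).
rewrite measureU //; last first.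
  apply/seteqP; split => x //=; rewrite !in_itv /= => -[xa /andP[ax _]].
  by move: (lt_le_trans ax xa); rewrite ltxx.
rewrite lteDl ?fin_num_measure //.
exact: N_itv_gt0.
Qed.

Lemma Phi_inj (a b : R) : N `]-oo, a]%classic = N `]-oo, b]%classic -> a = b.
Proof.
move=> e; case: (ltgtP a b) => // ab.
  by move: (@Phi_lt a b ab); rewrite e ltxx.
by move: (@Phi_lt b a ab); rewrite e ltxx.
Qed.
End phi2.
Section phi3.
Context {R : realType}.
Notation mu := (@lebesgue_measure R).
Notation N := (normal_prob (0:R) 1).


Lemma N_center (k : R) : (0 <= k)%R -> N `]-oo, k]%classic = (95 / 100)%:E ->
  N `[- k, k]%classic = (9 / 10)%:E.
Proof.
move=> k0 hk.
have e1 : `]-oo, k]%classic = `]-oo, - k[%classic `|` `[- k, k]%classic.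
  apply/seteqP; split => x /=; rewrite !in_itv /=.
    by move=> xk; case: (ltP x (- k)) => xk' /=; [left | right; rewrite xk].
  case => [xk|/andP[_ ->]] //; apply: ltW; apply: (lt_le_trans xk).
  lra.
have e2 : [set: R] = `]-oo, - k[%classic `|` `[- k, +oo[%classic.
  apply/seteqP; split => x //= _; rewrite !in_itv /= andbT.
  by case: (ltP x (- k)) => xk; [left | right].
have d1 : `]-oo, - k[%classic `&` `[- k, k]%classic = set0.
  apply/seteqP; split => x //=; rewrite !in_itv /= => -[xk /andP[kx _]].
  by move: (lt_le_trans xk kx); rewrite ltxx.
have d2 : `]-oo, - k[%classic `&` `[- k, +oo[%classic = set0.
  apply/seteqP; split => x //=; rewrite !in_itv /= andbT => -[xk kx].
  by move: (lt_le_trans xk kx); rewrite ltxx.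
have hs : N `[- k, +oo[%classic = N `]-oo, k]%classic.
  by have := @Phi_ge R 0 1 k ltr01; rewrite sub0r divr1.
have := probability_setT N; rewrite e2 measureU //= hs hk.
move: hk; rewrite e1 measureU //=.
have f1 : N `]-oo, - k[%classic \is a fin_num by rewrite fin_num_measure.
have f2 : N `[- k, k]%classic \is a fin_num by rewrite fin_num_measure.
rewrite -(fineK f1) -(fineK f2) -!EFinD => -[h1] [h2].
congr EFin; lra.
Qed.
End phi3.
Section opt.
Context {R : realType}.
Notation mu := (@lebesgue_measure R).

Lemma normal_pdf_cmp (m s e x : R) : 0 < s ->
  ((x - m) ^+ 2 <= e ^+ 2 ->
    normal_peak s * expR (- e ^+ 2 / (s ^+ 2 *+ 2)) <= normal_pdf m s x) /\
  (e ^+ 2 <= (x - m) ^+ 2 ->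
    normal_pdf m s x <= normal_peak s * expR (- e ^+ 2 / (s ^+ 2 *+ 2))).
Proof.
move=> s0; rewrite normal_pdfE ?gt_eqF // /normal_fun.
have s2 : 0 < s ^+ 2 *+ 2 by rewrite pmulrn_lgt0 // exprn_gt0.
split => h; rewrite ler_wpM2l ?normal_peak_ge0 // ler_expR !mulNr lerN2 ler_pM2r ?invr_gt0 //.
Qed.

Local Open Scope ereal_scope.
Lemma opt (m s e : R) (S : set R) : (0 < s)%R -> measurable S ->
  normal_prob m s S = normal_prob m s `[(m - e)%R, (m + e)%R]%classic ->
  mu `[(m - e)%R, (m + e)%R]%classic <= mu S.
Proof.
move=> s0 mS hS.
have [e0|e0] := (ltP e 0%R).
  rewrite lebesgue_measure_itv /= lte_fin.
  have -> : ((m - e) < (m + e))%R = false by apply/negbTE; rewrite -leNgt; lra.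
  exact: measure_ge0.
set C := `[(m - e)%R, (m + e)%R]%classic.
have mC : measurable C by exact: measurable_itv.
pose c0 := (normal_peak s * expR (- e ^+ 2 / (s ^+ 2 *+ 2)))%R.
have c0p : (0 < c0)%R by rewrite mulr_gt0 ?expR_gt0 // normal_peak_gt0 ?gt_eqF.
have hin x : C x -> (c0 <= normal_pdf m s x)%R.
  rewrite /C /= in_itv /= => /andP[h1 h2].
  by apply: (@normal_pdf_cmp m s e x s0).1; nra.
have hout x : ~ C x -> (normal_pdf m s x <= c0)%R.
  rewrite /C /= in_itv /= => /negP; rewrite negb_and -!ltNge => /orP[h|h].
    by apply: (@normal_pdf_cmp m s e x s0).2; nra.
  by apply: (@normal_pdf_cmp m s e x s0).2; nra.
have mCS : measurable (C `\` S) by exact: measurableD.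
have mSC : measurable (S `\` C) by exact: measurableD.
have eqD : normal_prob m s (S `\` C) = normal_prob m s (C `\` S).
  move: hS; rewrite (measureDI (normal_prob m s) mS mC) (measureDI (normal_prob m s) mC mS) (setIC C S).
  have f : normal_prob m s (S `&` C) \is a fin_num by rewrite fin_num_measure //; exact: measurableI.
  by move=> /(congr1 (fun z => z - normal_prob m s (S `&` C))); rewrite !addeK.
have lo : (c0%:E * mu (C `\` S) <= normal_prob m s (C `\` S)).
  rewrite -integral_cst //; apply: ge0_le_integral => //.
  - by move=> x _; rewrite lee_fin ltW.
  - by apply/measurable_EFinP/measurable_funTS; exact: measurable_normal_pdf.
  - by move=> x [xC _]; rewrite lee_fin hin.
have up : (normal_prob m s (S `\` C) <= c0%:E * mu (S `\` C)).
  rewrite -integral_cst //; apply: ge0_le_integral => //.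
  - by move=> x _; rewrite lee_fin normal_pdf_ge0.
  - by apply/measurable_EFinP/measurable_funTS; exact: measurable_normal_pdf.
  - by move=> x [_ xC]; rewrite lee_fin hout.
have key : mu (C `\` S) <= mu (S `\` C).
  move: lo; rewrite -eqD => lo; have := le_trans lo up.
  by rewrite lee_pmul2l // lte_fin.
rewrite (measureDI mu mC mS) (measureDI mu mS mC) (setIC S C).
exact: leeD.
Qed.
End opt.
Theorem theorem1 (R : realType) (P : probability (R * R)%type R)
  (mu1 mu0 s1 s0 rho muhat1 muhat0 l1 u1 l0 u0 : R) :
  is_bvn P mu1 mu0 s1 s0 rho ->
  muhat1 = mu1 -> muhat0 = mu0 ->
  0 <= l1 -> 0 <= u1 -> 0 <= l0 -> 0 <= u0 ->
  P [set y | y.1 <= muhat1 + u1] = (95 / 100)%:E ->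
  P [set y | muhat1 - l1 <= y.1] = (95 / 100)%:E ->
  P [set y | y.2 <= muhat0 + u0] = (95 / 100)%:E ->
  P [set y | muhat0 - l0 <= y.2] = (95 / 100)%:E ->
  let tau := muhat1 - muhat0 in
  let C := `[tau - Drho rho l1 u0, tau + Drho rho l0 u1] in
  P [set y | y.1 - y.2 \in C] = (9 / 10)%:E /\
  forall S : set R, measurable S ->
    P [set y | y.1 - y.2 \in S] = (9 / 10)%:E ->
    (lebesgue_measure [set` C] <= lebesgue_measure S)%E.
Proof.
move=> hb e1 e0 hl1 hu1 hl0 hu0 H1 H2 H3 H4 tau C.
subst muhat1 muhat0.
have [s1p s0p hr _] := hb.
have L1 (A : set R) : measurable A -> P ((fun y => y.1 - 0 * y.2) @^-1` A) = normal_prob mu1 s1 A.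
  move=> mA; rewrite (@law_lin R P mu1 mu0 s1 s0 rho 0 A hb mA) mul0r subr0.
  have -> : VV s1 s0 rho 0 = s1 ^+ 2 by rewrite /VV; ring.
  by rewrite sqrtr_sqr gtr0_norm.
have L0 (A : set R) : measurable A -> P (snd @^-1` A) = normal_prob mu0 s0 A.
  move=> mA; rewrite (@law_snd R P mu1 mu0 s1 s0 rho A hb mA) mul0r subr0.
  have -> : VV s0 s1 rho 0 = s0 ^+ 2 by rewrite /VV; ring.
  by rewrite sqrtr_sqr gtr0_norm.
have k1 : normal_prob 0 1 `]-oo, u1 / s1]%classic = (95 / 100)%:E.
  rewrite -(@Phi_le R mu1 s1 u1 s1p) -L1; last exact: measurable_itv.
  rewrite -H1; congr (P _); apply/seteqP; split => y; rewrite /= in_itv /= mul0r subr0 //.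
have k2 : normal_prob 0 1 `]-oo, l1 / s1]%classic = (95 / 100)%:E.
  rewrite -(@Phi_ge R mu1 s1 l1 s1p) -L1; last exact: measurable_itv.
  rewrite -H2; congr (P _); apply/seteqP; split => y; rewrite /= in_itv /= mul0r subr0 andbT //.
have k3 : normal_prob 0 1 `]-oo, u0 / s0]%classic = (95 / 100)%:E.
  rewrite -(@Phi_le R mu0 s0 u0 s0p) -L0; last exact: measurable_itv.
  rewrite -H3; congr (P _); apply/seteqP; split => y; rewrite /= in_itv //.
have k4 : normal_prob 0 1 `]-oo, l0 / s0]%classic = (95 / 100)%:E.
  rewrite -(@Phi_ge R mu0 s0 l0 s0p) -L0; last exact: measurable_itv.
  rewrite -H4; congr (P _); apply/seteqP; split => y; rewrite /= in_itv /= andbT //.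
set k := u1 / s1.
have ek2 : l1 / s1 = k by apply: Phi_inj; rewrite k2 k1.
have ek3 : u0 / s0 = k by apply: Phi_inj; rewrite k3 k1.
have ek4 : l0 / s0 = k by apply: Phi_inj; rewrite k4 k1.
have k0 : 0 <= k by rewrite divr_ge0 // ltW.
have eu1 : u1 = k * s1 by rewrite /k divfK ?gt_eqF.
have el1 : l1 = k * s1 by rewrite -ek2 divfK ?gt_eqF.
have eu0 : u0 = k * s0 by rewrite -ek3 divfK ?gt_eqF.
have el0 : l0 = k * s0 by rewrite -ek4 divfK ?gt_eqF.
have Vp : 0 < VV s1 s0 rho 1 by exact: VV_gt0.
set sg := Num.sqrt (VV s1 s0 rho 1).
have sgp : 0 < sg by rewrite sqrtr_gt0.
have LD (A : set R) : measurable A -> P ((fun y => y.1 - 1 * y.2) @^-1` A) = normal_prob tau sg A.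
  by move=> mA; rewrite (@law_lin R P mu1 mu0 s1 s0 rho 1 A hb mA) mul1r.
have D1 : Drho rho l1 u0 = k * sg.
  rewrite /Drho el1 eu0.
  have -> : (k * s1) ^+ 2 + (k * s0) ^+ 2 - 2 * rho * (k * s1) * (k * s0) = k ^+ 2 * VV s1 s0 rho 1.
    by rewrite /VV; ring.
  by rewrite sqrtrM ?sqr_ge0 // sqrtr_sqr ger0_norm.
have D2 : Drho rho l0 u1 = k * sg.
  rewrite /Drho el0 eu1.
  have -> : (k * s0) ^+ 2 + (k * s1) ^+ 2 - 2 * rho * (k * s0) * (k * s1) = k ^+ 2 * VV s1 s0 rho 1.
    by rewrite /VV; ring.
  by rewrite sqrtrM ?sqr_ge0 // sqrtr_sqr ger0_norm.
have eC : [set y | y.1 - y.2 \in C] = (fun y => y.1 - 1 * y.2) @^-1` [set` C].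
  by apply/seteqP; split => y; rewrite /= mul1r.
have PC : P [set y | y.1 - y.2 \in C] = (9 / 10)%:E.
  rewrite eC LD; last exact: measurable_itv.
  rewrite /C D1 D2 normal_prob_aff ?gt_eqF //.
  rewrite -(@N_center R k k0 k1); congr (normal_prob 0 1 _).
  apply/seteqP; split => x; rewrite /= !in_itv /= => /andP[xa xb]; apply/andP; split; nra.
split => // S mS HS.
have hS : normal_prob tau sg S = normal_prob tau sg [set` C].
  rewrite -LD // -LD; last exact: measurable_itv.
  rewrite -eC PC -HS; congr (P _); apply/seteqP; split => y; rewrite /= mul1r in_setE //.
move: hS; rewrite /C D1 D2 => hS.
exact: (@opt R tau sg (k * sg) S sgp mS hS).
Qed.
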